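(* Let $\mathcal{X}\subset\mathbb{R}^n$ be closed and convex, $\Xi\subset\mathbb{R}^m$ closed and convex, $\beta\in(0,1)$, $\varphi:\mathcal{X}\times\mathcal{X}\times\Xi\to\mathbb{R}$ bounded and continuous, and $\mathcal{Y}:\mathcal{X}\times\Xi\rightrightarrows\mathcal{X}$ nonempty-valued, compact-valued and continuous. Let $\xi_1,\ldots,\xi_N\in\Xi$ and $\mu_N=\frac1N\sum_{i=1}^N\xi_i$. Let $\mathcal{P}$ be a set of probability distributions on $\Xi$ such that $\mathbb{E}_Q[\boldsymbol{\xi}]=\mu_N$ for every $Q\in\mathcal{P}$ and the point mass $\delta_{\mu_N}\in\mathcal{P}$. If the MPC Bellman operator $B_{\mathrm{M}}$ is concavity preserving, then the DRO functional equation $$v_{\mathrm{R}}(x,\xi)=\inf_{y\in\mathcal{Y}(x,\xi)}\Bigl\{\varphi(x,y,\xi)+\beta\sup_{Q\in\mathcal{P}}\mathbb{E}_Q[v_{\mathrm{R}}(y,\boldsymbol{\xi})]\Bigr\}\quad\forall(x,\xi)\in\mathcal{X}\times\Xi$$ has a solution which is the same as the (unique bounded continuous) solution $v_{\mathrm{M}}$ of the MPC functional equation $$v_{\mathrm{M}}(x,\xi)=\inf_{y\in\mathcal{Y}(x,\xi)}\bigl\{\varphi(x,y,\xi)+\beta v_{\mathrm{M}}(y,\mu_N)\bigr\}\quad\forall(x,\xi)\in\mathcal{X}\times\Xi.$$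
   Context: $C_b(\mathcal{X}\times\Xi)$ denotes the Banach space of bounded continuous real-valued functions on $\mathcal{X}\times\Xi$ with the sup norm. The MPC Bellman operator $B_{\mathrm{M}}:C_b(\mathcal{X}\times\Xi)\to C_b(\mathcal{X}\times\Xi)$ is $B_{\mathrm{M}}(f)(x,\xi)=\inf_{y\in\mathcal{Y}(x,\xi)}\{\varphi(x,y,\xi)+\beta f(y,\mu_N)\}$. $B_{\mathrm{M}}$ is called concavity preserving if there exists a closed subset $\mathcal{F}\subset C_b(\mathcal{X}\times\Xi)$ such that $\xi\mapsto f(x,\xi)$ is concave for every $x\in\mathcal{X}$ and $f\in\mathcal{F}$, and $B_{\mathrm{M}}(\mathcal{F})\subset\mathcal{F}$. *)

(* Defs.v *)
From HB Require Import structures.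
From mathcomp Require Import all_boot all_order all_algebra.
From mathcomp Require Import all_classical all_reals all_analysis.
Set Implicit Arguments. Unset Strict Implicit. Unset Printing Implicit Defensive.
Import Order.TTheory GRing.Theory Num.Theory.
Import numFieldNormedType.Exports.
Local Open Scope classical_set_scope.
Local Open Scope ring_scope.

Notation vec R n := 'rV[R]_n.

Definition borelRV (R : realType) (m : nat) :=
  g_sigma_algebraType (@open 'rV[R]_m).

(* Functions on X x Xi are represented curried and total; only their values on
   X x Xi matter.  C_b(X x Xi): bounded and continuous on X x Xi. *)
Definition Cb (R : realType) (n m : nat) (X : set (vec R n)) (Xi : set (vec R m))
    (f : vec R n -> vec R m -> R) : Prop :=
  (exists M : R, forall x xi, X x -> Xi xi -> `|f x xi| <= M) /\
  {within X `*` Xi, continuous (fun p : vec R n * vec R m => f p.1 p.2)}.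

Definition concave_on (R : realType) (m : nat) (D : set (vec R m))
    (g : vec R m -> R) : Prop :=
  convex_function (D : set (convex_lmodType (vec R m))) (fun z => - g z).

Definition uhc_on (T U : topologicalType) (D : set T) (G : T -> set U) : Prop :=
  forall p, D p -> forall V : set U, open V -> G p `<=` V ->
    exists2 W, nbhs p W & forall q, W q -> D q -> G q `<=` V.

Definition lhc_on (T U : topologicalType) (D : set T) (G : T -> set U) : Prop :=
  forall p, D p -> forall V : set U, open V -> G p `&` V !=set0 ->
    exists2 W, nbhs p W & forall q, W q -> D q -> G q `&` V !=set0.

Definition continuous_corr (T U : topologicalType) (D : set T) (G : T -> set U) :=
  uhc_on D G /\ lhc_on D G.

Definition emp_mean (R : realType) (m N : nat) (xis : 'I_N -> vec R m) : vec R m :=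
  N%:R^-1 *: \sum_(i < N) xis i.

Definition BM (R : realType) (n m : nat) (Y : vec R n -> vec R m -> set (vec R n))
    (phi : vec R n -> vec R n -> vec R m -> R) (beta : R) (mu : vec R m)
    (f : vec R n -> vec R m -> R) : vec R n -> vec R m -> R :=
  fun x xi => inf [set phi x y xi + beta * f y mu | y in Y x xi].

(* Closedness is w.r.t. the sup norm on X x Xi (uniform limits). *)
Definition concavity_preserving (R : realType) (n m : nat)
    (X : set (vec R n)) (Xi : set (vec R m))
    (B : (vec R n -> vec R m -> R) -> vec R n -> vec R m -> R) : Prop :=
  exists F : set (vec R n -> vec R m -> R),
    [/\ F !=set0,
        F `<=` Cb X Xi,
        (forall (u : nat -> vec R n -> vec R m -> R) f,
            (forall k, F (u k)) -> Cb X Xi f ->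
            (forall e : R, 0 < e -> exists K, forall k, (K <= k)%N ->
               forall x xi, X x -> Xi xi -> `|u k x xi - f x xi| <= e) ->
            F f),
        (forall f, F f -> forall x, X x -> concave_on Xi (f x)) &
        (forall f, F f -> F (B f))].

Definition MPC_eq (R : realType) (n m : nat) (X : set (vec R n)) (Xi : set (vec R m))
    (Y : vec R n -> vec R m -> set (vec R n))
    (phi : vec R n -> vec R n -> vec R m -> R) (beta : R) (mu : vec R m)
    (v : vec R n -> vec R m -> R) : Prop :=
  forall x xi, X x -> Xi xi -> v x xi = BM Y phi beta mu v x xi.

Definition DRO_eq (R : realType) (n m : nat) (X : set (vec R n)) (Xi : set (vec R m))
    (Y : vec R n -> vec R m -> set (vec R n))
    (phi : vec R n -> vec R n -> vec R m -> R) (beta : R)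
    (P : set (probability (borelRV R m) R))
    (v : vec R n -> vec R m -> R) : Prop :=
  forall x xi, X x -> Xi xi ->
    ((v x xi)%:E =
     ereal_inf [set ((phi x y xi)%:E + beta%:E *
                      ereal_sup [set (\int[Q]_(z in (Xi : set (borelRV R m))) (v y z)%:E)%E
                                | Q in P])%E
               | y in Y x xi])%E.

(* Main.v *)
Require Import Defs.
From HB Require Import structures.
From mathcomp Require Import all_boot all_order all_algebra.
From mathcomp Require Import all_classical all_reals all_analysis.
Import Order.TTheory GRing.Theory Num.Theory.
Import numFieldNormedType.Exports.
Local Open Scope classical_set_scope.
Local Open Scope ring_scope.
From mathcomp Require Import ring lra.
Local Open Scope convex_scope.

Section Aux.
Variable R : realType.

Lemma cvg_sq {T} (F : set_system T) {FF : Filter F} (f : T -> R) (a : R) :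
  f @ F --> a -> (fun x => f x ^+ 2) @ F --> a ^+ 2.
Proof. by move=> h; exact: (cvgM h h). Qed.

Lemma cvg_bigsum {T} (F : set_system T) {FF : Filter F} (I : Type) (s : seq I)
  (f : I -> T -> R) (a : I -> R) :
  (forall i, f i @ F --> a i) ->
  (fun x => \sum_(i <- s) f i x) @ F --> \sum_(i <- s) a i.
Proof.
move=> h; elim: s => [|i s IH].
  rewrite big_nil; under eq_fun do rewrite big_nil; exact: cvg_cst.
rewrite big_cons; under eq_fun do rewrite big_cons.
exact: cvgD.
Qed.

Definition pp (a : R) := (a + `|a|) / 2.
Lemma ppE a : pp a = if a <= 0 then 0 else a.
Proof.
rewrite /pp; case: ifP => h.
  by rewrite ler0_norm // subrr mul0r.
rewrite gtr0_norm ?ltNge ?h //; by field.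
Qed.
Lemma pp_ge0 a : 0 <= pp a.
Proof. by rewrite ppE; case: ifP => // /negbT; rewrite -ltNge => /ltW. Qed.
Lemma pp_ge a : a <= pp a. Proof. by rewrite ppE; case: ifP. Qed.
Lemma pp_sq K G t : t <= G -> pp (K - G) ^+ 2 <= (K - t) ^+ 2.
Proof.
move=> tG; rewrite ppE; case: ifP => h.
  by rewrite expr0n /= sqr_ge0.
move/negbT: h; rewrite -ltNge => h; rewrite !expr2; nra.
Qed.
Lemma cvg_pp {T} (F : set_system T) {FF : Filter F} (f : T -> R) (a : R) :
  f @ F --> a -> (fun x => pp (f x)) @ F --> pp a.
Proof.
move=> h; rewrite /pp.
apply: cvgMl; apply: cvgD => //; exact: cvg_norm.
Qed.

Lemma small_l (X D : R) : 0 <= D ->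
  (forall l, 0 < l -> l <= 1 -> 0 <= 2 * X + l * D) -> 0 <= X.
Proof.
move=> D0 H; rewrite leNgt; apply/negP => X0.
have D1 : 0 < D + 1 by lra.
have [h|h] := leP (- X / (D + 1)) 1.
  have l0 : 0 < - X / (D + 1) by rewrite divr_gt0 // oppr_gt0.
  have := H _ l0 h; set l := - X / (D + 1) => H1.
  have e : l * (D + 1) = - X by rewrite /l mulfVK // gt_eqF.
  nra.
have := H 1 ltr01 (lexx _); move: h; rewrite ltr_pdivlMr // mul1r => h.
lra.
Qed.
End Aux.
Arguments pp {R}.
Arguments pp_ge0 {R}. Arguments pp_ge {R}. Arguments pp_sq {R} [K G t]. Arguments small_l {R} [X D].

Section Jensen.
Variables (R : realType) (m : nat) (Xi : set 'rV[R]_m) (g : 'rV[R]_m -> R) (mu : 'rV[R]_m).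
Hypotheses (cXi : closed Xi) (vXi : convex_set (Xi : set (convex_lmodType 'rV[R]_m)))
  (Ximu : Xi mu) (gconc : concave_on Xi g) (gcont : {within Xi, continuous g}).

Lemma affine_major (e : R) : 0 < e ->
  exists (C : R) (w : 'I_m -> R),
    (forall z, Xi z -> g z <= C + \sum_(j < m) w j * z ord0 j) /\
    C + \sum_(j < m) w j * mu ord0 j <= g mu + e.
Proof.
move=> e0.
set K := g mu + e.
pose phi (z : 'rV[R]_m) := \sum_(j < m) (z ord0 j - mu ord0 j) ^+ 2 + pp (K - g z) ^+ 2.
have phicont : {within Xi, continuous phi}.
  apply/subspace_continuousP => x Xx; apply: cvgD.
    apply: cvg_within_filter; apply: cvg_bigsum => j.
    apply: cvg_sq; apply: cvgB; [exact: coord_continuous | exact: cvg_cst].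
  apply: cvg_sq; apply: cvg_pp; apply: cvgB; first exact: cvg_cst.
  by move/subspace_continuousP : gcont; apply.
pose Box := [set v : 'rV[R]_m | forall i, (fun i => [set` `[mu ord0 i - e, mu ord0 i + e]]) i (v ord0 i)].
have cBox : compact (Box `&` Xi).
  apply: compact_closedI => //; apply: rV_compact => i; exact: segment_compact.
have BXmu : (Box `&` Xi) mu.
  split => // i /=; rewrite in_itv /=; apply/andP; split.
    by rewrite lerBlDr lerDl ltW.
  by rewrite lerDl ltW.
have [zs /set_mem [Bzs Xzs] zsmin] := compact_EVT_min (ex_intro _ mu BXmu) cBox
  (continuous_subspaceW (@subIsetr _ Box Xi) phicont).
have phimu : phi mu = e ^+ 2.
  rewrite /phi big1 ?add0r; last by move=> j _; rewrite subrr expr0n.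
  by rewrite /K addrC addKr ppE lt_geF.
have zsmin' : forall z, Xi z -> phi zs <= phi z.
  move=> z Xz; case: (pselect (Box z)) => Bz.
    by apply: zsmin; apply/mem_set.
  have /existsNP [i Bi] := Bz.
  apply: (le_trans (zsmin mu (mem_set BXmu))); rewrite phimu.
  apply: (@le_trans _ _ ((z ord0 i - mu ord0 i) ^+ 2)).
    move: Bi; rewrite /= in_itv /= -ler_distlC => /negP; rewrite -ltNge => lt.
    rewrite -(real_normK (num_real (z ord0 i - mu ord0 i))).
    have lt' : e <= `|z ord0 i - mu ord0 i| by rewrite distrC ltW.
    by rewrite !expr2; apply: ler_pM => //; exact: ltW.
  rewrite /phi /= (bigD1 i) //= -addrA lerDl addr_ge0 ?sqr_ge0 //.
  by apply: sumr_ge0 => j _; exact: sqr_ge0.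
set c := pp (K - g zs).
set ts := K - c.
have c0 : 0 <= c := pp_ge0 _.
have tsg : ts <= g zs by rewrite /ts; have := pp_ge (K - g zs); rewrite -/c; lra.
have key : forall z, Xi z -> c * (g z - ts) <=
    \sum_(j < m) (zs ord0 j - mu ord0 j) * (z ord0 j - zs ord0 j).
  move=> z Xz; rewrite -subr_ge0; apply: (small_l (D := \sum_(j < m) (z ord0 j - zs ord0 j) ^+ 2 + (g z - ts) ^+ 2)).
    by rewrite addr_ge0 ?sqr_ge0 //; apply: sumr_ge0 => j _; exact: sqr_ge0.
  move=> l l0 l1.
  pose lt := Itv01 (ltW l0) l1.
  pose zl := ((z : convex_lmodType 'rV[R]_m) <| lt |> zs).
  have Xzl : Xi zl by apply/set_mem; apply: vXi; apply/mem_set.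
  have zlE : forall j, zl ord0 j = l * z ord0 j + (1 - l) * zs ord0 j.
    by move=> j; rewrite /zl /conv /= !mxE.
  have gzl : l * g z + (1 - l) * ts <= g zl.
    have := gconc lt z zs (mem_set Xz) (mem_set Xzs); rewrite convRE /= => h.
    have : (1 - l) * ts <= (1 - l) * g zs by apply: ler_wpM2l; lra.
    move: h; rewrite /unstable.onem /= -/zl; lra.
  have hpp := pp_sq (K:=K) gzl.
  have := zsmin' zl Xzl; rewrite /phi /=.
  rewrite [in X in _ <= X -> _](eq_bigr (fun j => (zs ord0 j - mu ord0 j) ^+ 2 + (2 * l) * ((zs ord0 j - mu ord0 j) * (z ord0 j - zs ord0 j)) + l ^+ 2 * (z ord0 j - zs ord0 j) ^+ 2)); last by move=> j _; rewrite zlE; ring.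
  rewrite !big_split /= -!mulr_sumr -/c.
  set A := \sum_(j < m) _ ^+ 2.
  set B := \sum_(j < m) _ * _.
  set Cc := \sum_(j < m) _ ^+ 2.
  move=> h.
  suff : 0 <= l * (2 * (B - c * (g z - ts)) + l * (Cc + (g z - ts) ^+ 2)).
    by rewrite pmulr_rge0.
  move: h hpp; rewrite /ts !expr2; nra.
have cpos : 0 < c.
  rewrite lt_neqAle c0 andbT; apply/negP => /eqP c0'.
  have := key mu Ximu; rewrite -c0' mul0r.
  rewrite (eq_bigr (fun j => - (zs ord0 j - mu ord0 j) ^+ 2)); last by move=> j _; ring.
  rewrite sumrN oppr_ge0 => hs.
  have hs0 : \sum_(j < m) (zs ord0 j - mu ord0 j) ^+ 2 = 0.
    apply/eqP; rewrite eq_le hs /=; apply: sumr_ge0 => j _; exact: sqr_ge0.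
  have zsmu : zs = mu.
    apply/rowP => j; apply/eqP; rewrite -subr_eq0 -sqrf_eq0; apply/eqP.
    by apply: (psumr_eq0P _ hs0) => // i _; exact: sqr_ge0.
  move: c0'; rewrite /c zsmu /K addrC addKr ppE lt_geF //.
  by move=> /eqP; rewrite eq_sym gt_eqF.
pose w j := (zs ord0 j - mu ord0 j) / c.
have cn0 : c != 0 by rewrite gt_eqF.
exists (ts - \sum_(j < m) w j * zs ord0 j), w; split.
  move=> z Xz; have := key z Xz => h.
  have e1 : (\sum_(j < m) (zs ord0 j - mu ord0 j) * (z ord0 j - zs ord0 j)) / c =
      \sum_(j < m) w j * z ord0 j - \sum_(j < m) w j * zs ord0 j.
    by rewrite mulr_suml -sumrB; apply: eq_bigr => j _; rewrite /w; field.
  have : g z - ts <= (\sum_(j < m) (zs ord0 j - mu ord0 j) * (z ord0 j - zs ord0 j)) / c.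
    by rewrite ler_pdivlMr // mulrC.
  rewrite e1; lra.
have e2 : \sum_(j < m) w j * mu ord0 j - \sum_(j < m) w j * zs ord0 j =
    - ((\sum_(j < m) (zs ord0 j - mu ord0 j) ^+ 2) / c).
  by rewrite mulr_suml -sumrB -sumrN; apply: eq_bigr => j _; rewrite /w; field.
have : 0 <= (\sum_(j < m) (zs ord0 j - mu ord0 j) ^+ 2) / c.
  by apply: divr_ge0; [apply: sumr_ge0 => j _; exact: sqr_ge0 | exact: ltW].
move: e2; rewrite /ts; lra.
Qed.
End Jensen.
Arguments affine_major {R m Xi g mu}.

Section Meas.
Variables (R : realType) (m : nat).

Lemma open_measB (O : set 'rV[R]_m) : open O -> measurable (O : set (borelRV R m)).
Proof. by move=> oO; apply: sub_sigma_algebra. Qed.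

Lemma closed_measB (Xi : set 'rV[R]_m) : closed Xi -> measurable (Xi : set (borelRV R m)).
Proof.
move=> cX; rewrite -[Xi]setCK; apply: measurableC; apply: open_measB.
exact: closed_openC.
Qed.

Lemma meas_within (Xi : set 'rV[R]_m) (g : 'rV[R]_m -> R) :
  closed Xi -> {within Xi, continuous g} ->
  measurable_fun (Xi : set (borelRV R m)) (g : borelRV R m -> R).
Proof.
move=> cX gc.
apply: (measurability _ (measurable_realfun.RGenOpens.measurableE R)) => _ [_ [a [b ->]] <-].
have := (continuousP _).1 gc _ (@interval_open R (BRight a) (BLeft b) isT isT).
move/open_subspaceP => [V oV VE].
rewrite setIC -VE; apply: measurableI; [exact: open_measB | exact: closed_measB].
Qed.
End Meas.
Arguments closed_measB {R m Xi}. Arguments open_measB {R m O}. Arguments meas_within {R m Xi g}.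

Section JensenInt.
Variables (R : realType) (m : nat) (Xi : set 'rV[R]_m) (g : 'rV[R]_m -> R) (mu : 'rV[R]_m)
  (Q : probability (borelRV R m) R).
Hypotheses (cXi : closed Xi) (vXi : convex_set (Xi : set (convex_lmodType 'rV[R]_m)))
  (Ximu : Xi mu) (gconc : concave_on Xi g) (gcont : {within Xi, continuous g})
  (gbd : exists M, forall z, Xi z -> `|g z| <= M)
  (QX : Q (Xi : set (borelRV R m)) = 1%E)
  (Qmean : forall j : 'I_m,
       Q.-integrable [set: borelRV R m] (fun z : borelRV R m => (z ord0 j)%:E) /\
       (\int[Q]_z (z ord0 j)%:E = (mu ord0 j)%:E)%E).

Let mX : measurable (Xi : set (borelRV R m)) := closed_measB cXi.

Lemma g_integrable : Q.-integrable (Xi : set (borelRV R m)) (fun z => (g z)%:E).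
Proof.
have QXf : (Q (Xi : set (borelRV R m)) < +oo)%E by rewrite QX ltry.
have := @measurable_bounded_integrable _ (borelRV R m) R Q g _ mX.
apply.
- exact: QXf.
- exact: meas_within.
- have [M0 hM] := gbd; exists M0; split; first exact: num_real.
  by move=> M hM1 x Xx; apply: le_trans (hM x Xx) (ltW hM1).
Qed.

Lemma coord_int j : Q.-integrable (Xi : set (borelRV R m)) (fun z : borelRV R m => (z ord0 j)%:E).
Proof. exact: (integrableS measurableT mX (@subsetT _ _) (Qmean j).1). Qed.

Lemma coord_val j : (\int[Q]_(z in (Xi : set (borelRV R m))) (z ord0 j)%:E = (mu ord0 j)%:E)%E.
Proof.
rewrite -(Qmean j).2 [in RHS](negligible_integral (D := setT) (N := ~` (Xi : set (borelRV R m)))) //.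
- by rewrite setTD setCK.
- exact: measurableC.
- exact: (Qmean j).1.
- have h := probability_setC Q mX; rewrite QX subee // in h.
Qed.

Lemma affine_int (C : R) (w : 'I_m -> R) :
  Q.-integrable (Xi : set (borelRV R m)) (fun z : borelRV R m => (C + \sum_(j < m) w j * z ord0 j)%:E) /\
  (\int[Q]_(z in (Xi : set (borelRV R m))) (C + \sum_(j < m) w j * z ord0 j)%:E =
   (C + \sum_(j < m) w j * mu ord0 j)%:E)%E.
Proof.
have E : (fun z : borelRV R m => (C + \sum_(j < m) w j * z ord0 j)%:E) =
   (fun z => C%:E + \sum_(j < m) ((w j)%:E * (z ord0 j)%:E))%E.
  by apply: funext => z; rewrite EFinD -sumEFin.
have ic : Q.-integrable (Xi : set (borelRV R m)) (fun _ => C%:E).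
  exact: (finite_measure_integrable_cst Q C mX).
have iS : Q.-integrable (Xi : set (borelRV R m)) (fun z : borelRV R m => \sum_(j < m) ((w j)%:E * (z ord0 j)%:E))%E.
  by apply: integrable_sum => // j _; apply: integrableZl => //; exact: coord_int.
rewrite E; split; first exact: integrableD.
rewrite integralD // integral_cst //.
rewrite (_ : (C%:E * _)%E = C%:E); last by rewrite -[RHS]mule1; congr (_ * _)%E; exact: QX.
rewrite integral_sum //; last first.
  by move=> j; apply: integrableZl => //; exact: coord_int.
rewrite EFinD -sumEFin; congr (_ + _)%E; apply: eq_bigr => j _.
by rewrite integralZl ?coord_val //; exact: coord_int.
Qed.

Lemma jensen_int : (\int[Q]_(z in (Xi : set (borelRV R m))) (g z)%:E <= (g mu)%:E)%E.
Proof.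
apply/lee_addgt0Pr => e e0.
have [C [w [hC hmu]]] := affine_major cXi vXi Ximu gconc gcont e e0.
have [ih iv] := affine_int C w.
apply: (@le_trans _ _ (\int[Q]_(z in (Xi : set (borelRV R m))) (C + \sum_(j < m) w j * z ord0 j)%:E)%E).
  apply: le_integral => //; first exact: g_integrable.
  by move=> z /set_mem Xz; rewrite lee_fin; apply: hC.
by rewrite iv -EFinD lee_fin.
Qed.
End JensenInt.
Arguments jensen_int {R m Xi g mu Q}.

Lemma geo_small {R : realType} {b t : R} : 0 <= b -> b < 1 -> 0 < t ->
  exists K, forall k, (K <= k)%N -> b ^+ k <= t.
Proof.
move=> b0 b1 t0.
have h : `|b| < 1 by rewrite ger0_norm.
have [K _ hK] := (cvgrPdist_le _ _).1 (cvg_expr h) t t0.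
exists K => k kK; have := hK k kK; rewrite /= sub0r normrN ger0_norm //.
exact: exprn_ge0.
Qed.

Lemma eq_of_small {R : realType} {a b : R} : (forall d, 0 < d -> `|a - b| <= d) -> a = b.
Proof.
move=> h; apply/eqP; rewrite -subr_eq0 -normr_le0; apply/ler_addgt0Pr => d d0.
by rewrite add0r; apply: h.
Qed.

Section BMsec.
Variables (R : realType) (n m : nat) (X : set 'rV[R]_n) (Xi : set 'rV[R]_m) (beta : R)
  (phi : 'rV[R]_n -> 'rV[R]_n -> 'rV[R]_m -> R) (Y : 'rV[R]_n -> 'rV[R]_m -> set 'rV[R]_n)
  (mu : 'rV[R]_m).
Hypotheses (b0 : 0 < beta) (b1 : beta < 1)
  (phibd : exists M, forall x y xi, X x -> X y -> Xi xi -> `|phi x y xi| <= M)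
  (Yne : forall x xi, X x -> Xi xi -> Y x xi !=set0)
  (YX : forall x xi, X x -> Xi xi -> Y x xi `<=` X)
  (Ximu : Xi mu).

Definition bnd (f : 'rV[R]_n -> 'rV[R]_m -> R) :=
  exists M, forall x xi, X x -> Xi xi -> `|f x xi| <= M.

Local Notation B := (BM Y phi beta mu).

Lemma BM_lbound f x xi : bnd f -> X x -> Xi xi ->
  has_lbound [set phi x y xi + beta * f y mu | y in Y x xi].
Proof.
case=> Mf hf Xx Xxi; have [Mp hp] := phibd.
exists (- (Mp + beta * Mf)) => _ [y Yy <-].
have Xy := YX x xi Xx Xxi y Yy.
have := hp x y xi Xx Xy Xxi; have := hf y mu Xy Ximu.
rewrite !ler_norml => /andP [h1 h2] /andP [h3 h4].
have : beta * (- Mf) <= beta * f y mu by apply: ler_wpM2l => //; exact: ltW.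
lra.
Qed.

Lemma BM_le f g c : bnd f ->
  (forall y, X y -> f y mu <= g y mu + c) ->
  forall x xi, X x -> Xi xi -> B f x xi <= B g x xi + beta * c.
Proof.
move=> bf hfg x xi Xx Xxi; rewrite /BM -lerBlDr.
apply: lb_le_inf.
  by have [y Yy] := Yne x xi Xx Xxi; exists (phi x y xi + beta * g y mu); exists y.
move=> _ [y Yy <-].
have Xy := YX x xi Xx Xxi y Yy.
have := ge_inf (BM_lbound f x xi bf Xx Xxi) (ex_intro2 _ _ y Yy erefl).
have : beta * f y mu <= beta * (g y mu + c) by apply: ler_wpM2l; [exact: ltW | exact: hfg].
lra.
Qed.

Lemma BM_contr {f g c} : bnd f -> bnd g ->
  (forall x xi, X x -> Xi xi -> `|f x xi - g x xi| <= c) ->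
  forall x xi, X x -> Xi xi -> `|B f x xi - B g x xi| <= beta * c.
Proof.
move=> bf bg h x xi Xx Xxi.
rewrite ler_norml; apply/andP; split.
  have := @BM_le g f c bg _ x xi Xx Xxi.
  have H : forall y, X y -> g y mu <= f y mu + c.
    by move=> y Xy; have := h y mu Xy Ximu; rewrite ler_norml => /andP[]; lra.
  move/(_ H); lra.
have := @BM_le f g c bf _ x xi Xx Xxi.
have H : forall y, X y -> f y mu <= g y mu + c.
  by move=> y Xy; have := h y mu Xy Ximu; rewrite ler_norml => /andP[]; lra.
move/(_ H); lra.
Qed.

Lemma fixed_point (F : set ('rV[R]_n -> 'rV[R]_m -> R)) :
  F !=set0 -> F `<=` Cb X Xi ->
  (forall (u : nat -> 'rV[R]_n -> 'rV[R]_m -> R) f,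
      (forall k, F (u k)) -> Cb X Xi f ->
      (forall e : R, 0 < e -> exists K, forall k, (K <= k)%N ->
         forall x xi, X x -> Xi xi -> `|u k x xi - f x xi| <= e) -> F f) ->
  (forall f, F f -> F (B f)) ->
  exists v, [/\ F v, Cb X Xi v & forall x xi, X x -> Xi xi -> v x xi = B v x xi].
Proof.
move=> [f0 Ff0] FCb Fcl FB.
pose u k := iter k B f0.
have Fu : forall k, F (u k) by elim => [|k IH] //=; exact: FB.
have bu : forall k, bnd (u k) by move=> k; case: (FCb _ (Fu k)).
have [M0 hM0] := bu 0%N; have [M1 hM1] := bu 1%N.
pose c0 := `|M1| + `|M0|.
have c00 : 0 <= c0 by rewrite addr_ge0.
have d1 : forall k x xi, X x -> Xi xi -> `|u k.+1 x xi - u k x xi| <= beta ^+ k * c0.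
  elim => [|k IH] x xi Xx Xxi.
    rewrite expr0 mul1r; apply: (le_trans (ler_normB _ _)).
    have := hM1 x xi Xx Xxi; have := hM0 x xi Xx Xxi.
    have := ler_norm M1; have := ler_norm M0; rewrite /c0; lra.
  have := BM_contr (bu k.+1) (bu k) IH x xi Xx Xxi.
  by rewrite exprS -mulrA.
have b1' : 0 < 1 - beta by rewrite subr_gt0.
pose e k := beta ^+ k * c0 / (1 - beta).
have e0 : forall k, 0 <= e k.
  move=> k; apply: divr_ge0; last exact: ltW.
  by apply: mulr_ge0 => //; apply: exprn_ge0; exact: ltW.
have ed : forall k d x xi, X x -> Xi xi ->
    `|u (k + d)%N x xi - u k x xi| <= (beta ^+ k - beta ^+ (k + d)) * c0 / (1 - beta).
  move=> k; elim => [|d IH] x xi Xx Xxi.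
    by rewrite addn0 !subrr normr0 !mul0r.
  apply: (le_trans (ler_distD (u (k + d)%N x xi) _ _)).
  rewrite addnS.
  have := d1 (k + d)%N x xi Xx Xxi; have := IH x xi Xx Xxi.
  have -> : (beta ^+ k - beta ^+ (k + d).+1) * c0 / (1 - beta) =
     (beta ^+ k - beta ^+ (k + d)) * c0 / (1 - beta) + beta ^+ (k + d) * c0.
    by rewrite exprS; field; rewrite gt_eqF.
  lra.
have Cau : forall k l x xi, (k <= l)%N -> X x -> Xi xi -> `|u l x xi - u k x xi| <= e k.
  move=> k l x xi kl Xx Xxi; rewrite -(subnKC kl).
  apply: (le_trans (ed _ _ _ _ Xx Xxi)).
  have : 0 <= beta ^+ (k + (l - k)) * c0 / (1 - beta).
    apply: divr_ge0; last exact: ltW.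
    by apply: mulr_ge0 => //; apply: exprn_ge0; exact: ltW.
  rewrite /e !mulrBl; lra.
pose v x xi := sup [set u k x xi - e k | k in [set: nat]].
have vb : forall k x xi, X x -> Xi xi -> `|v x xi - u k x xi| <= e k.
  move=> k x xi Xx Xxi.
  have ub : forall j, u j x xi - e j <= u k x xi + e k.
    move=> j; case: (leqP j k) => jk.
      have := Cau j k x xi jk Xx Xxi; rewrite ler_norml => /andP[h1 h2].
      have := e0 k; lra.
    have := Cau k j x xi (ltnW jk) Xx Xxi; rewrite ler_norml => /andP[h1 h2].
    have := e0 j; lra.
  have hub : has_ubound [set u j x xi - e j | j in [set: nat]].
    by exists (u k x xi + e k) => _ [j _ <-]; exact: ub.
  have lb : u k x xi - e k <= v x xi by apply: ub_le_sup => //; exists k.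
  have le : v x xi <= u k x xi + e k.
    apply: ge_sup; first by exists (u 0%N x xi - e 0%N); exists 0%N.
    by move=> _ [j _ <-]; exact: ub.
  rewrite ler_norml; apply/andP; split; lra.
have esmall : forall t, 0 < t -> exists K, forall k, (K <= k)%N -> e k <= t.
  move=> t t0.
  have s0 : 0 < t * (1 - beta) / (c0 + 1) by rewrite divr_gt0 ?mulr_gt0 // ltr_pwDr.
  have [K hK] := geo_small (ltW b0) b1 s0.
  exists K => k kK; have := hK k kK.
  set s := t * (1 - beta) / (c0 + 1) => hk.
  have es : s * (c0 + 1) = t * (1 - beta) by rewrite /s mulfVK // gt_eqF // ltr_pwDr.
  rewrite /e ler_pdivrMr //.
  have : beta ^+ k * c0 <= s * c0 by apply: ler_wpM2r.
  nra.
have bv : bnd v.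
  exists (`|M0| + e 0%N) => x xi Xx Xxi.
  have := vb 0%N x xi Xx Xxi; have := hM0 x xi Xx Xxi; have := ler_norm M0.
  rewrite !ler_norml => h1 /andP[h2 h3] /andP[h4 h5]; apply/andP; split; lra.
have Cbv : Cb X Xi v.
  split => //.
  apply/subspace_continuousP => -[x xi] /= [Xx Xxi].
  apply/cvgrPdist_lt => eps eps0.
  have [K hK] := esmall (eps / 3) (divr_gt0 eps0 (ltr0n _ 3)).
  have := (FCb _ (Fu K)).2.
  move/subspace_continuousP/(_ (x, xi) (conj Xx Xxi))/cvgrPdist_lt/(_ (eps / 3) (divr_gt0 eps0 (ltr0n _ 3))) => hc.
  apply: filterS2 hc (withinT _ _) => -[y yi] /= h [Xy Xyi].
  have := vb K x xi Xx Xxi; have := vb K y yi Xy Xyi; have := hK K (leqnn K).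
  move: h; rewrite /from_subspace /= !ltr_norml !ler_norml => /andP[h1 h2] h3 /andP[h4 h5] /andP[h6 h7].
  apply/andP; split; lra.
have unif : forall t : R, 0 < t -> exists K, forall k, (K <= k)%N ->
    forall x xi, X x -> Xi xi -> `|u k x xi - v x xi| <= t.
  move=> t t0; have [K hK] := esmall t t0; exists K => k kK x xi Xx Xxi.
  by rewrite distrC; apply: le_trans (vb k x xi Xx Xxi) (hK k kK).
have Fv := Fcl u v Fu Cbv unif.
exists v; split => // x xi Xx Xxi.
apply: eq_of_small => d d0.
have [K hK] := esmall (d / 2) (divr_gt0 d0 (ltr0n _ 2)).
have h1 := vb K.+1 x xi Xx Xxi.
have h2 := hK K.+1 (leqnSn K).
have h3 := hK K (leqnn K).
have h4 : `|B (u K) x xi - B v x xi| <= beta * e K.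
  apply: BM_contr => // y yi Xy Xyi; rewrite distrC; exact: vb.
have h5 : beta * e K <= e K.
  have := e0 K; have := ltW b1; nra.
have uK : u K.+1 = B (u K) by [].
rewrite uK in h1.
apply: (le_trans (ler_distD (B (u K) x xi) _ _)).
lra.
Qed.

Lemma unique_fp v w : bnd v -> bnd w ->
  (forall x xi, X x -> Xi xi -> v x xi = B v x xi) ->
  (forall x xi, X x -> Xi xi -> w x xi = B w x xi) ->
  forall x xi, X x -> Xi xi -> w x xi = v x xi.
Proof.
move=> bv bw fv fw.
have [Mv hv] := bv; have [Mw hw] := bw.
pose c := `|Mv| + `|Mw|.
have c0 : 0 <= c by rewrite addr_ge0.
have H : forall k x xi, X x -> Xi xi -> `|w x xi - v x xi| <= beta ^+ k * c.
  elim => [|k IH] x xi Xx Xxi.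
    rewrite expr0 mul1r; apply: (le_trans (ler_normB _ _)).
    have := hv x xi Xx Xxi; have := hw x xi Xx Xxi.
    have := ler_norm Mv; have := ler_norm Mw; rewrite /c; lra.
  rewrite (fv x xi Xx Xxi) (fw x xi Xx Xxi).
  have := BM_contr bw bv IH x xi Xx Xxi.
  by rewrite exprS -mulrA.
move=> x xi Xx Xxi; apply: eq_of_small => d d0.
have s0 : 0 < d / (c + 1) by rewrite divr_gt0 // ltr_pwDr.
have [K hK] := geo_small (ltW b0) b1 s0.
have := H K x xi Xx Xxi; have := hK K (leqnn K).
set s := d / (c + 1) => hk.
have es : s * (c + 1) = d by rewrite /s mulfVK // gt_eqF // ltr_pwDr.
have : beta ^+ K * c <= s * c by apply: ler_wpM2r.
have : 0 <= s by exact: ltW.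
nra.
Qed.
End BMsec.

Lemma cont_slice (R : realType) (n m : nat) (X : set 'rV[R]_n) (Xi : set 'rV[R]_m)
  (f : 'rV[R]_n -> 'rV[R]_m -> R) y :
  {within X `*` Xi, continuous (fun p : 'rV[R]_n * 'rV[R]_m => f p.1 p.2)} -> X y ->
  {within Xi, continuous (f y)}.
Proof.
move=> hc Xy; apply/subspace_continuousP => z Xiz.
apply/cvgrPdist_lt => eps eps0.
move: hc => /subspace_continuousP/(_ (y, z) (conj Xy Xiz))/cvgrPdist_lt/(_ eps eps0).
move=> [[U V] [/= nU nV] UV].
apply: filterS nV => z' Vz' Xiz'.
have := UV (y, z') (conj (nbhs_singleton nU) Vz') (conj Xy Xiz').
by rewrite /from_subspace.
Qed.

Arguments cont_slice {R n m X Xi f y}.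

Theorem theorem1 (R : realType) (n m N : nat)
    (X : set 'rV[R]_n) (Xi : set 'rV[R]_m) (beta : R)
    (phi : 'rV[R]_n -> 'rV[R]_n -> 'rV[R]_m -> R)
    (Y : 'rV[R]_n -> 'rV[R]_m -> set 'rV[R]_n)
    (xis : 'I_N -> 'rV[R]_m)
    (P : set (probability (borelRV R m) R)) :
  closed X -> convex_set (X : set (convex_lmodType 'rV[R]_n)) ->
  closed Xi -> convex_set (Xi : set (convex_lmodType 'rV[R]_m)) ->
  0 < beta < 1 ->
  (exists M : R, forall x y xi, X x -> X y -> Xi xi -> `|phi x y xi| <= M) ->
  {within (X `*` X) `*` Xi,
     continuous (fun p : ('rV[R]_n * 'rV[R]_n) * 'rV[R]_m => phi p.1.1 p.1.2 p.2)} ->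
  (forall x xi, X x -> Xi xi ->
     [/\ Y x xi !=set0, compact (Y x xi) & Y x xi `<=` X]) ->
  continuous_corr (X `*` Xi) (fun p : 'rV[R]_n * 'rV[R]_m => Y p.1 p.2) ->
  (0 < N)%N ->
  (forall i, Xi (xis i)) ->
  (forall Q, P Q ->
     Q (Xi : set (borelRV R m)) = 1%E /\
     forall j : 'I_m,
       Q.-integrable [set: borelRV R m] (fun z : borelRV R m => (z ord0 j)%:E) /\
       (\int[Q]_z (z ord0 j)%:E = (emp_mean xis ord0 j)%:E)%E) ->
  P (\d_(emp_mean xis : borelRV R m)) ->
  concavity_preserving X Xi (BM Y phi beta (emp_mean xis)) ->
  exists v : 'rV[R]_n -> 'rV[R]_m -> R,
    [/\ Cb X Xi v,
        MPC_eq X Xi Y phi beta (emp_mean xis) v,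
        DRO_eq X Xi Y phi beta P v &
        (forall w, Cb X Xi w -> MPC_eq X Xi Y phi beta (emp_mean xis) w ->
           forall x xi, X x -> Xi xi -> w x xi = v x xi)].
Proof.
move=> cX vX cXi vXi /andP[b0 b1] phibd phicont Yprop Ycont N0 xisXi HP PD
  [F [Fne FCb Fcl Fconc FB]].
set mu := emp_mean xis.
have [dXi dmean] := HP _ PD.
have Ximu : Xi mu.
  have h : (\d_(mu : borelRV R m) (Xi : set (borelRV R m)) = 1)%E := dXi.
  move: h; rewrite diracE; case: (boolP (mu \in Xi)) => [/set_mem //|_].
  by move=> /eqP; rewrite eqe eq_sym oner_eq0.
have Yne : forall x xi, X x -> Xi xi -> Y x xi !=set0.
  by move=> x xi Xx Xxi; case: (Yprop x xi Xx Xxi).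
have YX : forall x xi, X x -> Xi xi -> Y x xi `<=` X.
  by move=> x xi Xx Xxi; case: (Yprop x xi Xx Xxi).
have [v [Fv Cbv fv]] := @fixed_point R n m X Xi beta phi Y mu b0 b1 phibd Yne YX Ximu F Fne FCb Fcl FB.
have bv : @bnd R n m X Xi v by case: Cbv.
exists v; split => //; last first.
  move=> w Cbw fw x xi Xx Xxi.
  have bw : @bnd R n m X Xi w by case: Cbw.
  exact: (@unique_fp R n m X Xi beta phi Y mu b0 b1 phibd Yne YX Ximu v w bv bw fv fw x xi Xx Xxi).
have supE : forall y, X y ->
    ereal_sup [set (\int[Q]_(z in (Xi : set (borelRV R m))) (v y z)%:E)%E | Q in P] = (v y mu)%:E.
  move=> y Xy; apply/eqP; rewrite eq_le; apply/andP; split.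
    apply: ge_ereal_sup => _ [Q PQ <-].
    have [QX Qm] := HP Q PQ.
    apply: (jensen_int cXi vXi Ximu (Fconc v Fv y Xy) (cont_slice Cbv.2 Xy) _ QX Qm).
    by have [M hM] := bv; exists M => z Xz; exact: hM.
  apply: ereal_sup_ubound; exists (\d_(mu : borelRV R m)) => //.
  have mX : measurable (Xi : set (borelRV R m)) := closed_measB cXi.
  have h : (\int[\d_(mu : borelRV R m)]_(z in (Xi : set (borelRV R m))) (v y z)%:E =
      \d_(mu : borelRV R m) (Xi : set (borelRV R m)) * (v y mu)%:E)%E.
    have h2 := @integral_dirac _ (borelRV R m) (mu : borelRV R m) R _ mX (fun z : borelRV R m => (v y z)%:E).
    apply: h2; apply: (measurable_realfun.measurable_EFinP _ (v y : borelRV R m -> R)).2.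
    exact: meas_within (cont_slice Cbv.2 Xy).
  rewrite diracE mem_set // mul1e in h; exact: h.
move=> x xi Xx Xxi.
rewrite (fv x xi Xx Xxi) /BM -ereal_inf_EFin; last 2 first.
- exact: (@BM_lbound R n m X Xi beta phi Y mu b0 phibd YX Ximu v x xi bv Xx Xxi).
- by have [y Yy] := Yne x xi Xx Xxi; exists (phi x y xi + beta * v y mu); exists y.
congr ereal_inf; apply/seteqP; split.
  move=> _ [_ [y Yy <-] <-].
  by exists y => //; rewrite supE //; exact: (YX x xi Xx Xxi y Yy).
move=> _ [y Yy <-].
exists (phi x y xi + beta * v y mu); first by exists y.
by rewrite supE //; exact: (YX x xi Xx Xxi y Yy).
Qed.
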